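(* Let $X$ be a nontrivial real Banach space. The following assertions are equivalent: (i) $X^*$ is weakly octahedral; (ii) whenever $E$ is a finite-dimensional subspace of $X^*$, $x\in B_X$, and $\varepsilon>0$, there is a $y^*\in S_{X^*}$ such that $\|x^*+y^*\|\geq(1-\varepsilon)(|x^*(x)|+\|y^*\|)$ for all $x^*\in E$; (iii) whenever $n\in\mathbb{N}$, $x_1^*,\dots,x_n^*\in S_{X^*}$, $x\in B_X$, and $\varepsilon>0$, there is a $y^*\in S_{X^*}$ such that $\|x_i^*+ty^*\|\geq(1-\varepsilon)(|x_i^*(x)|+t)$ for all $i\in\{1,\dots,n\}$ and $t\geq\varepsilon$.
   Context: $B_Z$, $S_Z$ denote the closed unit ball and unit sphere of a Banach space $Z$. A Banach space $Z$ is called weakly octahedral if for every finite-dimensional subspace $E$ of $Z$, every $z^*\in B_{Z^*}$, and every $\varepsilon>0$, there is a $y\in S_Z$ such that $\|z+y\|\geq(1-\varepsilon)(|z^*(z)|+\|y\|)$ for all $z\in E$. (Applied to $Z=X^*$, the functionals $z^*$ range over $B_{X^{**}}$.) *)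

(* Defs.v *)
From HB Require Import structures.
From mathcomp Require Import all_boot all_order all_algebra.
From mathcomp Require Import all_classical all_reals all_analysis.
Set Implicit Arguments. Unset Strict Implicit. Unset Printing Implicit Defensive.
Import Order.TTheory GRing.Theory Num.Theory.
Import numFieldNormedType.Exports.
Local Open Scope classical_set_scope.
Local Open Scope ring_scope.

Section Duality.
Variables (R : realType) (X : normedModType R).

Definition is_dual (f : X -> R) : Prop :=
  (forall (a : R) (u v : X), f (a *: u + v) = a * f u + f v) /\ continuous f.

Definition dnorm (f : X -> R) : R :=
  sup [set `|f x| | x in [set x : X | `|x| <= 1]].

Definition fd_dual_subspace (E : set (X -> R)) : Prop :=
  exists (n : nat) (f : 'I_n -> X -> R),
    (forall i, is_dual (f i)) /\
    E = [set z | exists c : 'I_n -> R, z = (fun x => \sum_(i < n) c i * f i x)].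

(* Phi is an element of the closed unit ball of X** (Phi is considered only
   on elements of X^dual): linear on X^dual and |Phi f| <= ||f|| *)
Definition in_bidual_ball (Phi : (X -> R) -> R) : Prop :=
  (forall (a : R) (f g : X -> R), is_dual f -> is_dual g ->
      Phi (fun x => a * f x + g x) = a * Phi f + Phi g) /\
  (forall f, is_dual f -> `|Phi f| <= dnorm f).

Definition dual_weakly_octahedral : Prop :=
  forall (E : set (X -> R)) (Phi : (X -> R) -> R) (eps : R),
    fd_dual_subspace E -> in_bidual_ball Phi -> 0 < eps ->
    exists y : X -> R, is_dual y /\ dnorm y = 1 /\
      forall z, E z ->
        dnorm (fun x => z x + y x) >= (1 - eps) * (`|Phi z| + dnorm y).

End Duality.

(* Main.v *)
Require Import Defs.
From HB Require Import structures.
From mathcomp Require Import all_boot all_order all_algebra finmap.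
From mathcomp Require Import all_classical all_reals all_analysis.
From mathcomp Require Import ring lra.
Import Order.TTheory GRing.Theory Num.Theory.
Import numFieldNormedType.Exports.
Local Open Scope classical_set_scope.
Local Open Scope ring_scope.
Set Implicit Arguments. Unset Strict Implicit. Unset Printing Implicit Defensive.

Section Basics.
Variables (R : realType) (X : normedModType R).
Implicit Types (f g : X -> R).

Lemma dual0 f : is_dual f -> f 0 = 0.
Proof.
case=> lin _; have := lin (-1) 0 0.
by rewrite scaleN1r oppr0 addr0 mulN1r addNr.
Qed.

Lemma dualZ f a u : is_dual f -> f (a *: u) = a * f u.
Proof. move=> fd; have := (fd.1 a u 0); by rewrite addr0 dual0 // addr0. Qed.

Lemma dualD f u v : is_dual f -> f (u + v) = f u + f v.
Proof. by move=> fd; have := (fd.1 1 u v); rewrite scale1r mul1r. Qed.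

Lemma dualN f u : is_dual f -> f (- u) = - f u.
Proof. by move=> fd; rewrite -scaleN1r dualZ // mulN1r. Qed.

Lemma dual_bounded f : is_dual f -> exists C, 0 < C /\ forall x, `|f x| <= C * `|x|.
Proof.
move=> fd; have := fd.2 0; move/cvgrPdist_lt => /(_ 1 ltr01).
rewrite dual0 // => /nbhs_ballP [e e0 He].
exists (2 / e); split; first by rewrite divr_gt0.
move=> x; have [->|x0] := eqVneq x 0; first by rewrite dual0 // !normr0 mulr0.
have nx0 : 0 < `|x| by rewrite normr_gt0.
pose u := (e / 2 / `|x|) *: x.
have hu : ball 0 e u.
  rewrite -ball_normE /= sub0r normrN /u normrZ ger0_norm; last first.
    by rewrite divr_ge0 // ?divr_ge0 // ltW.
  by rewrite divfK ?gt_eqF // ltr_pdivrMr // ltr_pMr // ltr1n.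
have := He _ hu; rewrite sub0r normrN /u dualZ // normrM ger0_norm; last first.
  by rewrite divr_ge0 // ?divr_ge0 // ltW.
move=> H.
have : e / 2 / `|x| * `|f x| <= 1 by apply: ltW.
rewrite -ler_pdivlMl; last by rewrite !divr_gt0.
move=> H2; apply: (le_trans H2); rewrite invf_div.
rewrite mulr1; lra.
Qed.

Definition dset f := [set `|f x| | x in [set x : X | `|x| <= 1]].

Lemma dset0 f : dset f !=set0.
Proof. by exists `|f 0|; exists 0 => //=; rewrite normr0. Qed.

Lemma dnorm_ub f x : is_dual f -> `|x| <= 1 -> `|f x| <= dnorm f.
Proof.
move=> fd x1; case: (dual_bounded fd) => C [C0 HC].
apply: sup_upper_bound; last by exists x.
split; first exact: dset0.
exists C => _ [y /= y1 <-]; apply: (le_trans (HC y)).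
by rewrite -{2}(mulr1 C) ler_wpM2l // ltW.
Qed.

Lemma dnorm_le f M : (forall x, `|x| <= 1 -> `|f x| <= M) -> dnorm f <= M.
Proof.
move=> H; apply: ge_sup; first exact: dset0.
by move=> _ [y /= y1 <-]; apply: H.
Qed.

Lemma dnorm_ge0 f : is_dual f -> 0 <= dnorm f.
Proof. by move=> fd; apply: le_trans (normr_ge0 (f 0)) (dnorm_ub fd _); rewrite normr0 ler01. Qed.


Lemma dnorm_mul f x : is_dual f -> `|f x| <= dnorm f * `|x|.
Proof.
move=> fd; have [->|x0] := eqVneq x 0; first by rewrite dual0 // !normr0 mulr0.
have nx0 : 0 < `|x| by rewrite normr_gt0.
have h1 : `|(`|x|^-1 *: x)| <= 1.
  by rewrite normrZ normrV ?unitfE ?gt_eqF // normr_id mulVf ?gt_eqF.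
have := dnorm_ub fd h1.
rewrite dualZ // normrM normrV ?unitfE ?gt_eqF // normr_id.
by rewrite ler_pdivrMl // mulrC.
Qed.

Lemma dnorm_ext f g : (forall x, f x = g x) -> dnorm f = dnorm g.
Proof. by move=> H; rewrite (funext H). Qed.

Lemma dual_lin f g a b : is_dual f -> is_dual g ->
  is_dual (fun u => a * f u + b * g u).
Proof.
move=> fd gd; split.
  by move=> c u v; rewrite !(fd.1, gd.1); ring.
move=> x; apply: (@continuousD _ _ _ (fun u => a * f u) (fun u => b * g u)).
  by have := continuousM (@cst_continuous _ _ a x) (fd.2 x).
by have := continuousM (@cst_continuous _ _ b x) (gd.2 x).
Qed.

Lemma dual_scale f a : is_dual f -> is_dual (fun u => a * f u).
Proof.
move=> fd; have -> : (fun u => a * f u) = (fun u => a * f u + 0 * f u).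
  by apply: funext => u; ring.
exact: dual_lin.
Qed.

Lemma dual_add f g : is_dual f -> is_dual g -> is_dual (fun u => f u + g u).
Proof.
move=> fd gd; have -> : (fun u => f u + g u) = (fun u => 1 * f u + 1 * g u).
  by apply: funext => u; ring.
exact: dual_lin.
Qed.

Lemma dual_zero : is_dual (fun _ : X => 0 : R).
Proof. split; first by move=> *; rewrite mulr0 addr0. exact: cst_continuous. Qed.

Lemma dnorm_zero : dnorm (fun _ : X => 0 : R) = 0.
Proof.
apply/le_anti; rewrite dnorm_ge0 ?andbT; last exact: dual_zero.
by apply: dnorm_le => x _; rewrite normr0.
Qed.

Lemma dnorm_add f g : is_dual f -> is_dual g ->
  dnorm (fun u => f u + g u) <= dnorm f + dnorm g.
Proof.
move=> fd gd; apply: dnorm_le => x x1; apply: (le_trans (ler_normD _ _)).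
by apply: lerD; apply: dnorm_ub.
Qed.

Lemma dnorm_scale f a : is_dual f -> dnorm (fun u => a * f u) = `|a| * dnorm f.
Proof.
move=> fd; have H1 : forall b g, is_dual g -> dnorm (fun u => b * g u) <= `|b| * dnorm g.
  move=> b g gd; apply: dnorm_le => x x1; rewrite normrM ler_wpM2l //.
  exact: dnorm_ub.
apply/le_anti; rewrite H1 //=.
have [->|a0] := eqVneq a 0.
  by rewrite normr0 mul0r; apply: dnorm_ge0; apply: dual_scale.
have ad : is_dual (fun u => a * f u) by apply: dual_scale.
have := H1 a^-1 _ ad; rewrite (dnorm_ext (g:=f)); last by move=> u; rewrite mulrA mulVf // mul1r.
rewrite normrV ?unitfE // ler_pdivlMl ?normr_gt0 //.
Qed.

Lemma dnorm_eq0 f x : is_dual f -> dnorm f = 0 -> f x = 0.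
Proof.
move=> fd H; have := dnorm_mul x fd; rewrite H mul0r.
by rewrite normr_le0 => /eqP.
Qed.


Lemma dual_sum (I : Type) (s : seq I) (c : I -> R) (F : I -> X -> R) :
  (forall i, is_dual (F i)) -> is_dual (fun x => \sum_(i <- s) c i * F i x).
Proof.
move=> Fd; elim: s => [|i s IH].
  have -> : (fun x => \sum_(i <- [::]) c i * F i x) = (fun _ => 0).
    by apply: funext => x; rewrite big_nil.
  exact: dual_zero.
have -> : (fun x => \sum_(j <- i :: s) c j * F j x) =
   (fun x => c i * F i x + 1 * (\sum_(j <- s) c j * F j x)).
  by apply: funext => x; rewrite big_cons mul1r.
exact: dual_lin.
Qed.

Lemma dnorm_sum_le (I : Type) (s : seq I) (c : I -> R) (F : I -> X -> R) :
  (forall i, is_dual (F i)) ->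
  dnorm (fun x => \sum_(i <- s) c i * F i x) <= \sum_(i <- s) `|c i| * dnorm (F i).
Proof.
move=> Fd; elim: s => [|i s IH].
  rewrite big_nil (dnorm_ext (g := fun _ => 0)) ?dnorm_zero //.
  by move=> x; rewrite big_nil.
rewrite big_cons (dnorm_ext (g := fun x => c i * F i x + (\sum_(j <- s) c j * F j x))); last first.
  by move=> x; rewrite big_cons.
apply: le_trans (dnorm_add _ _) _; first exact: dual_scale.
  exact: dual_sum.
by rewrite dnorm_scale // lerD2l.
Qed.

Lemma Phi_zero (Phi : (X -> R) -> R) : in_bidual_ball Phi -> Phi (fun _ => 0) = 0.
Proof.
move=> [lin _]; move: (lin (-1) _ _ dual_zero dual_zero) => H.
have E : (fun x : X => -1 * (fun=>0 : R) x + (fun=>0 : R) x) = (fun=>0).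
  by apply: funext => x /=; rewrite mulr0 addr0.
rewrite E in H; lra.
Qed.

Lemma Phi_sum (Phi : (X -> R) -> R) (I : Type) (s : seq I) (c : I -> R) (F : I -> X -> R) :
  in_bidual_ball Phi -> (forall i, is_dual (F i)) ->
  Phi (fun x => \sum_(i <- s) c i * F i x) = \sum_(i <- s) c i * Phi (F i).
Proof.
move=> Ph Fd; elim: s => [|i s IH].
  rewrite big_nil; have -> : (fun x => \sum_(i <- [::]) c i * F i x) = (fun _ => 0).
    by apply: funext => x; rewrite big_nil.
  exact: Phi_zero.
rewrite big_cons -IH -Ph.1 //; last exact: dual_sum.
by congr Phi; apply: funext => x; rewrite big_cons.
Qed.

Definition span n (F : 'I_n -> X -> R) :=
  [set z | exists c : 'I_n -> R, z = (fun x => \sum_(i < n) c i * F i x)].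

Lemma span_dual n (F : 'I_n -> X -> R) z : (forall i, is_dual (F i)) -> span F z -> is_dual z.
Proof. by move=> Fd [c ->]; apply: dual_sum. Qed.

Lemma span_lin n (F : 'I_n -> X -> R) z1 z2 a b : span F z1 -> span F z2 ->
  span F (fun u => a * z1 u + b * z2 u).
Proof.
move=> [c1 ->] [c2 ->]; exists (fun i => a * c1 i + b * c2 i).
apply: funext => x; rewrite !mulr_sumr -big_split /=.
by apply: eq_bigr => i _; ring.
Qed.

Lemma span_gen n (F : 'I_n -> X -> R) i : span F (F i).
Proof.
exists (fun j => if j == i then 1 else 0); apply: funext => x.
rewrite (bigD1 i) //= eqxx mul1r big1 ?addr0 // => j /negbTE ->; by rewrite mul0r.
Qed.


Lemma sq_le_sum m (a : 'I_m -> R) j : a j ^+ 2 <= \sum_(i < m) a i ^+ 2.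
Proof.
rewrite (bigD1 j) //= lerDl; apply: sumr_ge0 => i _; exact: sqr_ge0.
Qed.

Lemma helly m (w : 'I_m -> X -> R) Phi eta :
  (forall j, is_dual (w j)) -> in_bidual_ball Phi -> 0 < eta ->
  exists x : X, `|x| <= 1 /\ forall j, `|w j x - Phi (w j)| <= eta.
Proof.
move=> wd Ph eta0.
pose p j := Phi (w j).
pose F (x : X) := \sum_(j < m) (w j x - p j) ^+ 2.
have F0 x : 0 <= F x by apply: sumr_ge0 => j _; exact: sqr_ge0.
case: (pselect (exists x : X, `|x| <= 1 /\ F x <= eta ^+ 2)).
  move=> [x [x1 Fx]]; exists x; split => // j.
  have := le_trans (sq_le_sum (fun j => w j x - p j) j) Fx => /= h.
  move: h; rewrite /p; set a := w j x - Phi (w j) => h.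
  rewrite ler_norml; apply/andP; split; nra.
move=> Hno.
have H x : `|x| <= 1 -> eta ^+ 2 < F x.
  move=> x1; rewrite ltNge; apply/negP => h; apply: Hno; by exists x.
pose A := [set F x | x in [set x : X | `|x| <= 1]].
have A0 : A !=set0 by exists (F 0); exists 0 => //=; rewrite normr0.
have Ainf : has_inf A by split => //; exists 0 => _ [x _ <-].
pose d := inf A.
have dge : eta ^+ 2 <= d.
  by apply: lb_le_inf => // _ [x /= x1 <-]; apply: ltW; apply: H.
have d0 : 0 < d by apply: lt_le_trans dge; rewrite exprn_gt0.
have dlb x : `|x| <= 1 -> d <= F x by move=> x1; apply: (ge_inf Ainf.2); exists x.
pose S := \sum_(j < m) dnorm (w j) ^+ 2.
have S0 : 0 <= S by apply: sumr_ge0 => j _; exact: sqr_ge0.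
pose D := 4 * S + 1.
have D0 : 0 < D by rewrite /D; lra.
pose t := d / (2 * (D + d)).
have tE : t * (2 * (D + d)) = d by rewrite /t divfK // gt_eqF //; lra.
have t0 : 0 < t by rewrite /t divr_gt0 //; lra.
have t1 : t <= 1 by nra.
have tD : t * D <= d / 2 by nra.
pose e := d * t / 2.
have e0 : 0 < e by rewrite /e; nra.
have [_ [x0 x01 <-] Fx0] := inf_adherent e0 Ainf.
pose q j := w j x0.
pose c j := p j - q j.
have key x : `|x| <= 1 ->
    \sum_(j < m) c j * w j x <= \sum_(j < m) c j * q j + d / 2.
  move=> x1.
  pose xt := x0 + t *: (x - x0).
  have xt1 : `|xt| <= 1.
    have -> : xt = (1 - t) *: x0 + t *: x.
      by rewrite /xt scalerBr scalerBl scale1r addrA addrAC.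
    apply: le_trans (ler_normD _ _) _.
    have t1' : 0 <= 1 - t by rewrite subr_ge0.
    rewrite (normrZ (1 - t)) (normrZ t) (ger0_norm (ltW t0)) (ger0_norm t1').
    have : (1 - t) * `|x0| <= (1 - t) * 1 by rewrite ler_wpM2l.
    have : t * `|x| <= t * 1 by rewrite ler_wpM2l // ltW.
    lra.
  pose a j := w j x - q j.
  have wxt j : w j xt = q j + t * a j.
    by rewrite /xt dualD // dualZ // dualD // dualN.
  have Fxt : F xt = t ^+ 2 * \sum_(j < m) a j ^+ 2
                    - 2 * t * \sum_(j < m) c j * a j + \sum_(j < m) c j ^+ 2.
    rewrite /F !mulr_sumr -sumrB -big_split /=; apply: eq_bigr => j _.
    rewrite wxt /c; ring.
  have Fx0E : F x0 = \sum_(j < m) c j ^+ 2.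
    by apply: eq_bigr => j _; rewrite /c /q; ring.
  have A2 : \sum_(j < m) a j ^+ 2 <= D.
    apply: (@le_trans _ _ (\sum_(j < m) 4 * dnorm (w j) ^+ 2)); last first.
      by rewrite -mulr_sumr /D lerDl.
    apply: ler_sum => j _.
    have h1 := dnorm_ub (wd j) x1; have h2 := dnorm_ub (wd j) x01.
    move: h1 h2; rewrite /a /q !ler_norml => /andP[h1 h1'] /andP[h2 h2'].
    nra.
  have := dlb _ xt1; rewrite Fxt => hd.
  rewrite Fx0E in Fx0.
  have hCA : \sum_(j < m) c j * a j <= d / 2.
    set CA := \sum_(j < m) c j * a j in hd *.
    set SA := \sum_(j < m) a j ^+ 2 in hd A2 *.
    have hSA : 0 <= SA by apply: sumr_ge0 => j _; exact: sqr_ge0.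
    have h3 : 2 * t * CA <= t * d.
      have : t ^+ 2 * SA <= t * (t * D) by rewrite expr2 -mulrA ler_wpM2l ?ler_wpM2l // ltW.
      rewrite /e in Fx0; nra.
    nra.
  have -> : \sum_(j < m) c j * w j x = \sum_(j < m) c j * q j + \sum_(j < m) c j * a j.
    by rewrite -big_split /=; apply: eq_bigr => j _; rewrite /a; ring.
  by rewrite lerD2l.
pose g := fun u => \sum_(j < m) c j * w j u.
have gd : is_dual g by apply: dual_sum.
have hg : dnorm g <= \sum_(j < m) c j * q j + d / 2.
  apply: dnorm_le => x x1; rewrite ler_norml; apply/andP; split; last exact: key.
  have := key (- x); rewrite normrN => /(_ x1).
  have -> : \sum_(j < m) c j * w j (- x) = - g x.
    by rewrite /g -sumrN; apply: eq_bigr => j _; rewrite dualN // mulrN.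
  by rewrite lerNl.
have hPhi : Phi g = \sum_(j < m) c j * q j + \sum_(j < m) c j ^+ 2.
  rewrite /g Phi_sum // -big_split /=; apply: eq_bigr => j _; rewrite /c -/(p j); ring.
have Fx0E : F x0 = \sum_(j < m) c j ^+ 2.
  by apply: eq_bigr => j _; rewrite /c /q; ring.
have := Ph.2 g gd; rewrite hPhi => hn.
have := le_trans (ler_norm _) hn.
have : d <= \sum_(j < m) c j ^+ 2 by rewrite -Fx0E; apply: dlb.
move: hg; lra.
Qed.


Lemma sum_lift n (k : 'I_n.+1) (G : 'I_n.+1 -> R) :
  \sum_(i < n.+1) G i = G k + \sum_(i < n) G (lift k i).
Proof. by rewrite (bigD1_ord k (P := xpredT)). Qed.

Definition indep n (F : 'I_n -> X -> R) :=
  forall c : 'I_n -> R, (forall x, \sum_(i < n) c i * F i x = 0) -> forall i, c i = 0.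

Lemma indep_reduce n (F : 'I_n -> X -> R) : (forall i, is_dual (F i)) ->
  exists k (G : 'I_k -> X -> R), (forall i, is_dual (G i)) /\ indep G /\
    (forall z, span F z <-> span G z).
Proof.
elim: n F => [|n IH] F Fd.
  exists 0%N, F; split => //; split => //; by move=> c _ [].
case: (pselect (indep F)) => [Hi|Hni]; first by exists n.+1, F.
move: Hni; rewrite /indep => /existsNP [c /not_implyP [Hc /existsNP [k ck]]].
have {}ck : c k != 0 by apply/eqP.
pose G i := F (lift k i).
have Gd : forall i, is_dual (G i) by move=> i; apply: Fd.
have ckE x : c k * F k x + \sum_(i < n) c (lift k i) * G i x = 0.
  by rewrite -(sum_lift k (fun i => c i * F i x)) Hc.
have eqFG z : span F z <-> span G z.
  split.
    move=> [c' ->]; exists (fun i => c' (lift k i) - c' k * c (lift k i) / c k).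
    apply: funext => x; rewrite (sum_lift k) /=.
    have -> : F k x = - (\sum_(i < n) c (lift k i) * G i x) / c k.
      have := ckE x; move=> h; apply: (mulfI ck); rewrite mulrCA mulfV // mulr1; lra.
    have -> : \sum_(i < n) (c' (lift k i) - c' k * c (lift k i) / c k) * G i x =
      \sum_(i < n) c' (lift k i) * G i x - (c' k / c k) * \sum_(i < n) c (lift k i) * G i x.
      rewrite mulr_sumr -sumrB; apply: eq_bigr => i _; field; exact: ck.
    rewrite /G; field; exact: ck.
  move=> [d ->]; exists (fun i => if unlift k i is Some i' then d i' else 0).
  apply: funext => x; rewrite (sum_lift k) unlift_none mul0r add0r.
  by apply: eq_bigr => i _; rewrite liftK.
have [k' [G' [G'd [G'i eqG]]]] := IH G Gd.
exists k', G'; split => //; split => // z; rewrite eqFG; exact: eqG.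
Qed.


Lemma rv_entry_le m (v : 'rV[R]_m) i : `|v ord0 i| <= `|v|.
Proof.
have -> : `|v| = mx_norm v by [].
rewrite mx_normrE.
exact: (le_bigmax _ (fun ij : 'I_1 * 'I_m => `|v ij.1 ij.2|) (ord0, i)).
Qed.

Definition Nv m (G : 'I_m -> X -> R) (v : 'rV[R]_m) :=
  dnorm (fun x => \sum_(i < m) v ord0 i * G i x).

Lemma Nv_sub m (G : 'I_m -> X -> R) v w : (forall i, is_dual (G i)) ->
  Nv G v <= Nv G w + (\sum_(i < m) dnorm (G i)) * `|v - w|.
Proof.
move=> Gd; rewrite /Nv.
rewrite (dnorm_ext (g := fun x => \sum_(i < m) w ord0 i * G i x +
                      \sum_(i < m) (v ord0 i - w ord0 i) * G i x)); last first.
  by move=> x; rewrite -big_split /=; apply: eq_bigr => i _; ring.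
apply: le_trans (dnorm_add _ _) _; try exact: dual_sum.
rewrite lerD2l; apply: le_trans (dnorm_sum_le _ _ Gd) _.
rewrite mulr_suml; apply: ler_sum => i _; rewrite mulrC ler_wpM2l //.
  exact: dnorm_ge0.
by have := rv_entry_le (v - w) i; rewrite !mxE.
Qed.

Lemma Nv_cont m (G : 'I_m -> X -> R) : (forall i, is_dual (G i)) -> continuous (Nv G).
Proof.
move=> Gd v.
have FF : Filter (nbhs v) by exact: nbhs_filter.
have [_ H] := @cvgrPdist_le _ _ _ (nbhs v) FF (Nv G) (Nv G v).
apply: H => e e0.
pose L := \sum_(i < m) dnorm (G i).
have L0 : 0 <= L by apply: sumr_ge0 => i _; exact: dnorm_ge0.
apply/nbhs_ballP; exists (e / (L + 1)) => /=; first by rewrite divr_gt0 //; lra.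
move=> w; rewrite -ball_normE /= => hw.
have h1 := Nv_sub v w Gd; have h2 := Nv_sub w v Gd.
rewrite distrC in h2; rewrite -/L in h1 h2.
have h3 : L * `|v - w| <= (L + 1) * `|v - w| by rewrite ler_wpM2r //; lra.
have h4 : (L + 1) * `|v - w| < e by rewrite mulrC -ltr_pdivlMr; [exact: hw | lra].
rewrite ler_norml; apply/andP; split; lra.
Qed.


Lemma Nv_scale m (G : 'I_m -> X -> R) a v : (forall i, is_dual (G i)) ->
  Nv G (a *: v) = `|a| * Nv G v.
Proof.
move=> Gd; rewrite /Nv -dnorm_scale; last exact: dual_sum.
apply: dnorm_ext => x; rewrite mulr_sumr; apply: eq_bigr => i _; rewrite mxE; ring.
Qed.

Lemma norm_equiv m (G : 'I_m -> X -> R) : (forall i, is_dual (G i)) -> indep G ->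
  exists K, 0 < K /\ forall v, `|v| <= K * Nv G v.
Proof.
move=> Gd Gi.
have Nv0 v : 0 <= Nv G v by apply: dnorm_ge0; apply: dual_sum.
case: (pselect (exists v : 'rV[R]_m, v != 0)); last first.
  move=> H; exists 1; split => // v.
  case: (eqVneq v 0) => [->|hv]; last by exfalso; apply: H; exists v.
  by rewrite normr0 mul1r.
move=> [v0 hv0].
pose Sph := [set v : 'rV[R]_m | `|v| = 1].
have nv0 : 0 < `|v0| by rewrite normr_gt0.
have S0 : Sph !=set0.
  exists (`|v0|^-1 *: v0); rewrite /Sph /= normrZ normrV ?unitfE ?gt_eqF // normr_id.
  by rewrite mulVf // gt_eqF.
have Scomp : compact Sph.
  apply: bounded_closed_compact.
    exists 1; split => // M M1 v /= ->; exact: ltW.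
  have : closed ((fun v : 'rV[R]_m => `|v|) @^-1` [set x : R | x = 1]).
    apply: preimage_closed; last exact: closed_eq.
    move=> x _; exact: norm_continuous.
  by [].
have [c0 c0S Hmin] := compact_EVT_min S0 Scomp (@continuous_subspaceT _ _ Sph (Nv G) (Nv_cont Gd)).
rewrite inE in c0S.
have Nc0 : 0 < Nv G c0.
  rewrite lt_neqAle Nv0 andbT; apply/eqP => h.
  have hz : c0 = 0.
    apply/rowP => i; rewrite mxE; apply: (Gi (fun i => c0 ord0 i)) => x.
    exact: (dnorm_eq0 x (dual_sum _ _ Gd) (esym h)).
  by move: c0S; rewrite /Sph /= hz normr0 => /eqP; rewrite eq_sym oner_eq0.
exists (Nv G c0)^-1; split; first by rewrite invr_gt0.
move=> v; case: (eqVneq v 0) => [->|hv].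
  by rewrite normr0 mulr_ge0 // invr_ge0 ltW.
have nv : 0 < `|v| by rewrite normr_gt0.
have := Hmin (`|v|^-1 *: v).
rewrite inE /Sph /= normrZ normrV ?unitfE ?gt_eqF // normr_id mulVf ?gt_eqF // => /(_ erefl).
rewrite Nv_scale // normrV ?unitfE ?gt_eqF // normr_id => h.
have h2 : `|v| * Nv G c0 <= Nv G v.
  by move: h; rewrite -(ler_pM2l nv) mulrA mulfV ?gt_eqF // mul1r.
rewrite -(ler_pM2l Nc0) mulrA mulfV ?gt_eqF // mul1r; lra.
Qed.


Lemma fd_net n (F : 'I_n -> X -> R) M delta : (forall i, is_dual (F i)) -> 0 < delta ->
  exists k (w : 'I_k -> X -> R), (forall j, is_dual (w j) /\ span F (w j)) /\
    forall z, span F z -> dnorm z <= M ->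
      exists j, dnorm (fun x => z x - w j x) <= delta.
Proof.
move=> Fd d0.
have [m [G [Gd [Gi eqG]]]] := indep_reduce Fd.
have [K [K0 HK]] := norm_equiv Gd Gi.
pose L := \sum_(i < m) dnorm (G i).
have L0 : 0 <= L by apply: sumr_ge0 => i _; exact: dnorm_ge0.
pose rho := delta / (L + 1).
have rho0 : 0 < rho by rewrite divr_gt0 //; lra.
have rhoL : rho * L <= delta.
  rewrite /rho mulrAC ler_pdivrMr; last lra.
  by rewrite ler_wpM2l //; [exact: ltW | lra].
pose r := K * M.
pose A := [set v : 'rV[R]_m | `|v| <= r].
have Acomp : compact A.
  apply: bounded_closed_compact.
    exists r; split; first exact: num_real.
    by move=> M' hM' v /= hv; apply: le_trans hv _; apply: ltW.
  have : closed ((fun v : 'rV[R]_m => `|v|) @^-1` [set x : R | x <= r]).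
    apply: preimage_closed; last exact: closed_le.
    move=> x _; exact: norm_continuous.
  by [].
move: Acomp; rewrite compact_cover => Acov.
have cov : A `<=` cover [set: 'rV[R]_m] (fun v => ball v rho).
  by move=> v _; exists v => //; exact: ballxx.
have [D' _ HD'] := Acov _ [set: 'rV[R]_m] (fun v => ball v rho)
   (fun v _ => ball_open v rho) cov.
pose s := enum_fset D'.
exists (size s), (fun j x => \sum_(i < m) (nth 0 s j) ord0 i * G i x).
split.
  move=> j; split; first exact: dual_sum.
  by apply/eqG; exists (fun i => nth 0 s j ord0 i).
move=> z /eqG [c ->] hz.
pose v := \row_(i < m) c i.
have hNv : Nv G v = dnorm (fun x => \sum_(i < m) c i * G i x).
  by apply: dnorm_ext => x; apply: eq_bigr => i _; rewrite mxE.
have vA : A v.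
  rewrite /A /=; apply: le_trans (HK v) _; rewrite hNv ler_wpM2l //; exact: ltW.
have [c' c'D hball] := HD' v vA.
have c's : c' \in s by [].
have idx : (index c' s < size s)%N by rewrite index_mem.
exists (Ordinal idx); rewrite /= nth_index //.
rewrite (dnorm_ext (g := fun x => \sum_(i < m) (v ord0 i - c' ord0 i) * G i x)); last first.
  by move=> x; rewrite -sumrB; apply: eq_bigr => i _; rewrite mxE; ring.
apply: le_trans (dnorm_sum_le _ _ Gd) _.
apply: (@le_trans _ _ (\sum_(i < m) `|c' - v| * dnorm (G i))).
  apply: ler_sum => i _; rewrite ler_wpM2r ?dnorm_ge0 //.
  by have := rv_entry_le (c' - v) i; rewrite !mxE distrC.
rewrite -mulr_sumr; apply: le_trans rhoL; rewrite ler_wpM2r //.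
move: hball; rewrite -ball_normE /= => h; exact: ltW.
Qed.


Lemma dual_sub f g : is_dual f -> is_dual g -> is_dual (fun u => f u - g u).
Proof.
move=> fd gd; have -> : (fun u => f u - g u) = (fun u => 1 * f u + (-1) * g u).
  by apply: funext => u; ring.
exact: dual_lin.
Qed.

Lemma dnorm_tri f g : is_dual f -> is_dual g ->
  dnorm f <= dnorm (fun u => f u + g u) + dnorm g.
Proof.
move=> fd gd.
rewrite (dnorm_ext (f := f) (g := fun u => (f u + g u) + (-1) * g u)); last by move=> u; ring.
apply: le_trans (dnorm_add _ _) _; first exact: dual_add.
  exact: dual_scale.
by rewrite dnorm_scale // normrN normr1 mul1r.
Qed.

Lemma span_scale n (F : 'I_n -> X -> R) z a : span F z -> span F (fun u => a * z u).
Proof.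
move=> hz; have := span_lin a 0 hz hz.
have -> // : (fun u => a * z u + 0 * z u) = (fun u => a * z u).
by apply: funext => u; ring.
Qed.

Lemma big_case (z y : X -> R) (a eps : R) : is_dual z -> is_dual y -> dnorm y = 1 -> 0 < eps ->
  2 <= eps * dnorm z -> `|a| <= dnorm z ->
  (1 - eps) * (`|a| + 1) <= dnorm (fun u => z u + y u).
Proof.
move=> zd yd y1 e0 hz ha.
have h := dnorm_tri zd yd; rewrite y1 in h.
have h0 : 0 <= dnorm (fun u => z u + y u) by apply: dnorm_ge0; apply: dual_add.
have a0 : 0 <= `|a| := normr_ge0 a.
case: (lerP 1 eps) => he.
  apply: le_trans h0; apply: mulr_le0_ge0; lra.
have : (1 - eps) * `|a| <= (1 - eps) * dnorm z by rewrite ler_wpM2l // subr_ge0 ltW.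
nra.
Qed.

Definition propII := forall (E : set (X -> R)) (x : X) (eps : R),
      fd_dual_subspace E -> `|x| <= 1 -> 0 < eps ->
      exists y : X -> R, is_dual y /\ dnorm y = 1 /\
        forall z, E z ->
          dnorm (fun u => z u + y u) >= (1 - eps) * (`|z x| + dnorm y).

Definition propIII := forall (n : nat) (xs : 'I_n -> X -> R) (x : X) (eps : R),
      (forall i, is_dual (xs i) /\ dnorm (xs i) = 1) -> `|x| <= 1 -> 0 < eps ->
      exists y : X -> R, is_dual y /\ dnorm y = 1 /\
        forall (i : 'I_n) (t : R), eps <= t ->
          dnorm (fun u => xs i u + t * y u) >= (1 - eps) * (`|xs i x| + t).

Lemma i_ii : dual_weakly_octahedral X -> propII.
Proof.
move=> Hi E x eps hE x1 e0; apply: (Hi E (fun f => f x) eps hE _ e0).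
split; first by [].
by move=> f fd; exact: dnorm_ub.
Qed.

Lemma ii_iii : propII -> propIII.
Proof.
move=> Hii n xs x eps Hxs x1 e0.
have xsd i : is_dual (xs i) by case: (Hxs i).
have hE : fd_dual_subspace (span xs) by exists n, xs.
have [y [yd [y1 Hy]]] := Hii _ x eps hE x1 e0.
exists y; split => //; split => // i t ht.
have t0 : 0 < t by exact: (lt_le_trans e0 ht).
pose z := fun u => t^-1 * xs i u.
have Ez : span xs z by apply: span_scale; apply: span_gen.
have := Hy z Ez; rewrite y1 => h.
have zd : is_dual z by apply: dual_scale.
rewrite (dnorm_ext (g := fun u => t * (z u + y u))); last first.
  by move=> u; rewrite /z; field; rewrite gt_eqF.
rewrite dnorm_scale; last exact: dual_add.
rewrite (gtr0_norm t0).
have -> : (1 - eps) * (`|xs i x| + t) = t * ((1 - eps) * (`|z x| + 1)).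
  rewrite /z normrM gtr0_norm ?invr_gt0 //; field; by rewrite gt_eqF.
by rewrite ler_wpM2l // ltW.
Qed.


Lemma ii_i : propII -> dual_weakly_octahedral X.
Proof.
move=> Hii E Phi eps hE Ph e0.
have hx0 : `|0 : X| <= 1 by rewrite normr0 ler01.
case: (hE) => n [F [Fd HE]].
have Ed z : E z -> is_dual z by rewrite HE => hz; exact: span_dual hz.
case: (lerP 1 eps) => he.
  have [y [yd [y1 _]]] := Hii E 0 eps hE hx0 e0.
  exists y; split => //; split => // z Ez.
  apply: le_trans (dnorm_ge0 (dual_add (Ed z Ez) yd)).
  apply: mulr_le0_ge0; first lra.
  by apply: addr_ge0 => //; apply: dnorm_ge0.
pose M := 2 / eps.
have e8 : 0 < eps / 8 by rewrite divr_gt0.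
have [k [w [wd Hw]]] := fd_net M Fd e8.
have wd' j : is_dual (w j) by case: (wd j).
have [x [x1 Hx]] := helly wd' Ph e8.
have e2 : 0 < eps / 2 by rewrite divr_gt0.
have [y [yd [y1 Hy]]] := Hii E x (eps / 2) hE x1 e2.
exists y; split => //; split => // z Ez.
have zd := Ed z Ez.
rewrite y1; rewrite y1 in Hy.
case: (lerP (dnorm z) M) => hz; last first.
  apply: big_case => //; last exact: Ph.2.
  move: hz; rewrite /M ltr_pdivrMr // => h; rewrite mulrC; exact: ltW.
have Ez' : span F z by move: Ez; rewrite HE.
have [j hj] := Hw z Ez' hz.
have hy := Hy z Ez.
have h1 : `|z x - w j x| <= eps / 8.
  apply: le_trans hj; apply: (dnorm_ub (f := fun u => z u - w j u)) => //.
  exact: dual_sub.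
have h2 := Hx j.
have h3 : `|Phi (w j) - Phi z| <= eps / 8.
  have := Ph.1 (-1) (w j) z (wd' j) zd.
  have -> : (fun x0 => -1 * w j x0 + z x0) = (fun u => z u - w j u).
    by apply: funext => u; ring.
  move=> h; apply: le_trans hj; rewrite distrC.
  have -> : Phi z - Phi (w j) = Phi (fun u => z u - w j u) by rewrite h; ring.
  apply: Ph.2; exact: dual_sub.
have h4 : `|Phi z| <= `|z x| + 3 * eps / 8.
  have := lerB_dist (Phi z) (z x).
  have : `|Phi z - z x| <= 3 * eps / 8.
    have -> : Phi z - z x = (Phi z - Phi (w j)) + (Phi (w j) - w j x) + (w j x - z x) by ring.
    apply: le_trans (ler_normD _ _) _; apply: le_trans (lerD (ler_normD _ _) (lexx _)) _.
    rewrite distrC in h1; rewrite distrC in h2; rewrite distrC in h3; lra.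
  lra.
have hza : 0 <= `|z x| by [].
have : (1 - eps) * `|Phi z| <= (1 - eps) * (`|z x| + 3 * eps / 8).
  by rewrite ler_wpM2l // subr_ge0 ltW.
nra.
Qed.


Lemma iii_ii : propIII -> propII.
Proof.
move=> Hiii E x eps hE x1 e0.
case: (hE) => n [F [Fd HE]].
have Ed z : E z -> is_dual z by rewrite HE => hz; exact: span_dual hz.
have H0 : forall i : 'I_0, is_dual ((fun _ _ => 0 : R) i : X -> R) /\ dnorm ((fun _ _ => 0 : R) i : X -> R) = 1.
  by move=> [m]; rewrite ltn0.
have [y0 [y0d [y01 _]]] := Hiii 0%N (fun _ _ => 0) x eps H0 x1 e0; clear H0.
have [he|he] := lerP 1 eps.
  exists y0; split => //; split => // z Ez.
  apply: le_trans (dnorm_ge0 (dual_add (Ed z Ez) y0d)).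
  apply: mulr_le0_ge0; first lra.
  by apply: addr_ge0 => //; apply: dnorm_ge0.
pose delta := eps * eps / 16.
have d0 : 0 < delta by rewrite /delta; apply: divr_gt0 => //; apply: mulr_gt0.
have [k [w [wd Hw]]] := fd_net 1 Fd d0.
have wd' j : is_dual (w j) by case: (wd j).
pose xs j := if dnorm (w j) == 0 then y0 else (fun u => (dnorm (w j))^-1 * w j u).
have Hxs j : is_dual (xs j) /\ dnorm (xs j) = 1.
  rewrite /xs; case: eqP => h //.
  split; first exact: dual_scale.
  rewrite dnorm_scale // normrV ?unitfE ?h //; last by apply/eqP.
  rewrite ger0_norm ?dnorm_ge0 // mulVf //; exact/eqP.
have e2 : 0 < eps / 2 by rewrite divr_gt0.
have [y [yd [y1 Hy]]] := Hiii k xs x (eps / 2) Hxs x1 e2.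
exists y; split => //; split => // z Ez.
have zd := Ed z Ez.
rewrite y1.
pose s := dnorm z.
have s0 : 0 <= s by apply: dnorm_ge0.
case: (eqVneq s 0) => [hs|hs].
  have z0 u : z u = 0 by apply: dnorm_eq0.
  rewrite (dnorm_ext (g := y)); last by move=> u; rewrite z0 add0r.
  rewrite y1 z0 normr0 add0r mulr1; lra.
have sp : 0 < s by rewrite lt_neqAle eq_sym hs.
case: (lerP s (2 / eps)) => hsM; last first.
  apply: big_case => //; last exact: dnorm_ub.
  move: hsM; rewrite ltr_pdivrMr // => h; rewrite mulrC; exact: ltW.
pose wv := fun u => s^-1 * z u.
have wvd : is_dual wv by apply: dual_scale.
have wv1 : dnorm wv = 1 by rewrite dnorm_scale // normrV ?unitfE // ger0_norm // mulVf.
have Ewv : span F wv by apply: span_scale; move: Ez; rewrite HE.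
have wvle : dnorm wv <= 1 by rewrite wv1.
have [j hj] := Hw wv Ewv wvle.
pose dw := dnorm (w j).
have dw0 : 0 <= dw by apply: dnorm_ge0.
have hsubC f g : is_dual f -> is_dual g ->
    dnorm (fun u => f u - g u) = dnorm (fun u => g u - f u).
  move=> fd gd; rewrite -[RHS]mul1r -normrN1 -dnorm_scale; last exact: dual_sub.
  by apply: dnorm_ext => u; ring.
have hdw1 : dw <= 1 + delta.
  have := dnorm_tri (wd' j) (dual_sub wvd (wd' j)).
  rewrite (dnorm_ext (f := fun u => w j u + (wv u - w j u)) (g := wv)) ?wv1; last by move=> u; ring.
  rewrite -/dw; lra.
have hdw2 : 1 <= dw + delta.
  have := dnorm_tri wvd (dual_sub (wd' j) wvd).
  rewrite (dnorm_ext (f := fun u => wv u + (w j u - wv u)) (g := w j)); last by move=> u; ring.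
  rewrite wv1 hsubC // -/dw; lra.
have dl1 : delta < 1 by rewrite /delta; nra.
have dwp : 0 < dw by lra.
have xsj : xs j = (fun u => dw^-1 * w j u) by rewrite /xs -/dw gt_eqF.
have hdist : dnorm (fun u => wv u - xs j u) <= 2 * delta.
  rewrite xsj (dnorm_ext (g := fun u => (wv u - w j u) + (1 - dw^-1) * w j u)); last first.
    by move=> u; ring.
  apply: le_trans (dnorm_add (dual_sub wvd (wd' j)) (dual_scale _ (wd' j))) _.
  rewrite dnorm_scale // -/dw.
  have -> : `|1 - dw^-1| * dw = `|dw - 1|.
    by rewrite -[X in _ * X](ger0_norm dw0) -normrM mulrBl mul1r mulVf ?gt_eqF.
  have : `|dw - 1| <= delta by rewrite ler_norml; apply/andP; split; lra.
  lra.
have hB : `|wv x| - 2 * delta <= `|xs j x|.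
  have := lerB_dist (wv x) (xs j x).
  have : `|wv x - xs j x| <= 2 * delta.
    apply: le_trans hdist; apply: (dnorm_ub (f := fun u => wv u - xs j u)) => //.
    exact: dual_sub wvd (Hxs j).1.
  lra.
pose t := s^-1.
have st : s * t = 1 by rewrite /t mulfV.
have hsM' : eps * s <= 2 by move: hsM; rewrite ler_pdivlMr // mulrC.
have t0 : 0 < t by rewrite /t invr_gt0.
have ht : eps / 2 <= t.
  rewrite -(ler_pM2r sp) /t mulVf ?gt_eqF //; nra.
have hyj := Hy j t ht.
pose Q := dnorm (fun u => wv u + t * y u).
have hQ : dnorm (fun u => xs j u + t * y u) <= Q + 2 * delta.
  have := dnorm_tri (dual_add (Hxs j).1 (dual_scale t yd)) (dual_sub wvd (Hxs j).1).
  rewrite (dnorm_ext (f := fun u => xs j u + t * y u + (wv u - xs j u))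
                     (g := fun u => wv u + t * y u)); last by move=> u; ring.
  rewrite -/Q; lra.
have hzy : dnorm (fun u => z u + y u) = s * Q.
  rewrite /Q -(ger0_norm s0) -dnorm_scale; last exact: dual_add wvd (dual_scale t yd).
  apply: dnorm_ext => u; rewrite /wv /t; field; exact: hs.
have hzx : `|z x| = s * `|wv x|.
  by rewrite /wv normrM normrV ?unitfE // ger0_norm // mulrA mulfV // mul1r.
rewrite hzy hzx.
set A := `|wv x| in hB *.
set B := `|xs j x| in hB hyj.
have A0 : 0 <= A by apply: normr_ge0.
have hP1 : s * ((1 - eps / 2) * (B + t)) <= s * (Q + 2 * delta).
  rewrite ler_wpM2l //; lra.
have hP2 : s * (1 - eps / 2) * (A - 2 * delta) <= s * (1 - eps / 2) * B.
  rewrite ler_wpM2l //; apply: mulr_ge0 => //; lra.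
have hds : delta * s <= eps / 8.
  rewrite /delta; nra.
have E1 : s * ((1 - eps / 2) * (B + t)) = s * (1 - eps / 2) * B + (1 - eps / 2) * (s * t).
  by ring.
have E2 : s * (1 - eps / 2) * (A - 2 * delta) =
    (1 - eps / 2) * (s * A) - 2 * (1 - eps / 2) * (delta * s) by ring.
have E3 : s * (Q + 2 * delta) = s * Q + 2 * (delta * s) by ring.
rewrite E1 st E3 in hP1; rewrite E2 in hP2.
have hsA : 0 <= s * A by apply: mulr_ge0.
have hds0 : 0 <= delta * s by apply: mulr_ge0 => //; apply: ltW.
have h5 : 0 <= eps * (s * A) by apply: mulr_ge0 => //; apply: ltW.
have h6 : 0 <= eps * (delta * s) by apply: mulr_ge0 => //; apply: ltW.
move: hP1 hP2 hds hsA hds0 h5 h6 he e0.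
set P := s * (1 - eps / 2) * B.
set sA := s * A. set ds := delta * s. set sQ := s * Q.
move=> *; nra.
Qed.

Lemma main_equiv :
  (dual_weakly_octahedral X <-> propII) /\ (propII <-> propIII).
Proof.
split; split; [exact: i_ii | exact: ii_i | exact: ii_iii | exact: iii_ii].
Qed.

End Basics.

Theorem proposition2p6 (R : realType) (X : completeNormedModType R)
  (hX : exists x : X, x != 0) :
  (dual_weakly_octahedral X <->
   (forall (E : set (X -> R)) (x : X) (eps : R),
      fd_dual_subspace E -> `|x| <= 1 -> 0 < eps ->
      exists y : X -> R, is_dual y /\ dnorm y = 1 /\
        forall z, E z ->
          dnorm (fun u => z u + y u) >= (1 - eps) * (`|z x| + dnorm y)))
  /\
  ((forall (E : set (X -> R)) (x : X) (eps : R),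
      fd_dual_subspace E -> `|x| <= 1 -> 0 < eps ->
      exists y : X -> R, is_dual y /\ dnorm y = 1 /\
        forall z, E z ->
          dnorm (fun u => z u + y u) >= (1 - eps) * (`|z x| + dnorm y))
   <->
   (forall (n : nat) (xs : 'I_n -> X -> R) (x : X) (eps : R),
      (forall i, is_dual (xs i) /\ dnorm (xs i) = 1) -> `|x| <= 1 -> 0 < eps ->
      exists y : X -> R, is_dual y /\ dnorm y = 1 /\
        forall (i : 'I_n) (t : R), eps <= t ->
          dnorm (fun u => xs i u + t * y u) >= (1 - eps) * (`|xs i x| + t))).
Proof.
exact: (main_equiv X).
Qed.
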